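(* Let $V\in\mathcal{V}$, $\epsilon,c,c_1,c_2\in(0,\mathcal{L}_V(0))$, and $\alpha=\sqrt{\tau_V(c)\lambda_V(c)}$. Then \[\frac{\alpha}{\alpha+A}\,T_V\Big(c+\frac{A+\alpha}{Ae^{A\alpha}}\Big)\le\tau_V(c)\le T_V\Big(\frac{c}{1+c}\Big)\quad\forall A>0,\] and \[T_V\big(c_1+c_2e^{-T_V(\epsilon)\lambda_V(c_1)}+2\epsilon e^{-B}\big)\le T_V(\epsilon)+\frac{2B}{\lambda_V(c_2)}\quad\forall B>0.\] In particular, \[\tau_V(2\delta)\le T_V(\delta)\le\frac{6}{\delta^2}\tau_V(\delta/2)\quad\text{for all }0<\delta<\tfrac12(\mathcal{L}_V(0)\wedge1).\]
   Context: $\mathcal{V}$ is the class of non-decreasing right-continuous $V:(0,\infty)\to\mathbb{R}$ with $\lim_{\lambda\to0^+}V(\lambda)=0$, $\lim_{\lambda\to\infty}V(\lambda)<\infty$; $\mathcal{L}_V(t)=\int_{(0,\infty)}e^{-t\lambda}dV(\lambda)$. $T_V(\epsilon)=\min\{t\ge0:\mathcal{L}_V(t)\le\epsilon\}$ (with $T_V(\epsilon)=0$ if $\mathcal{L}_V(0)\le\epsilon$). For $c\in(0,\mathcal{L}_V(0))$: $\lambda_V(c)=\inf\{\lambda:V(\lambda)>c\}$, $\tau_V(c)=\sup_{\lambda\ge\lambda_V(c)}\lambda^{-1}\log(1+V(\lambda))$. $a\wedge b=\min\{a,b\}$. *)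

(* Defs.v *)
From Stdlib Require Import Reals Lra ClassicalEpsilon.
Open Scope R_scope.

(* The class 𝒱: non-decreasing, right-continuous V on (0,∞),
   V(0+) = 0, finite limit at ∞. Values of V outside (0,∞) are irrelevant. *)
Definition in_classV (V : R -> R) : Prop :=
  (forall x y, 0 < x -> x <= y -> V x <= V y) /\
  (forall x, 0 < x -> forall e, 0 < e -> exists d, 0 < d /\
       forall y, x <= y < x + d -> Rabs (V y - V x) < e) /\
  (forall e, 0 < e -> exists d, 0 < d /\ forall y, 0 < y < d -> Rabs (V y) < e) /\
  (exists L, forall e, 0 < e -> exists M, forall y, M < y -> Rabs (V y - L) < e).

Fixpoint rs_sum (f V : R -> R) (p xi : nat -> R) (n : nat) : R :=
  match n with
  | O => 0
  | S m => rs_sum f V p xi m + f (xi m) * (V (p (S m)) - V (p m))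
  end.

Definition tagged_partition (a b : R) (n : nat) (p xi : nat -> R) : Prop :=
  p O = a /\ p n = b /\
  (forall k, (k < n)%nat -> p k < p (S k) /\ p k <= xi k <= p (S k)).

Definition mesh_lt (n : nat) (p : nat -> R) (d : R) : Prop :=
  forall k, (k < n)%nat -> p (S k) - p k < d.

(* I is the Riemann–Stieltjes integral of f w.r.t. V on [a,b]
   (for right-continuous V this is the integral over (a,b] w.r.t. dV). *)
Definition is_RS_integral (f V : R -> R) (a b I : R) : Prop :=
  forall e, 0 < e -> exists d, 0 < d /\
    forall n p xi, tagged_partition a b n p xi -> mesh_lt n p d ->
      Rabs (rs_sum f V p xi n - I) < e.

(* I is the Lebesgue–Stieltjes integral of f over (0,∞) w.r.t. dV,
   obtained as the limit of integrals over (a,b], a -> 0+, b -> ∞. *)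
Definition is_LS_integral (f V : R -> R) (I : R) : Prop :=
  forall e, 0 < e -> exists a0 b0, 0 < a0 /\
    forall a b, 0 < a < a0 -> b0 < b ->
      exists J, is_RS_integral f V a b J /\ Rabs (J - I) < e.

Definition LapV (V : R -> R) (t : R) : R :=
  epsilon (inhabits 0) (fun I => is_LS_integral (fun l => exp (- (t * l))) V I).

Definition TV (V : R -> R) (eps : R) : R :=
  epsilon (inhabits 0) (fun t => 0 <= t /\ LapV V t <= eps /\
     forall s, 0 <= s -> LapV V s <= eps -> t <= s).

Definition is_inf (S : R -> Prop) (m : R) : Prop :=
  (forall x, S x -> m <= x) /\ (forall m', (forall x, S x -> m' <= x) -> m' <= m).
Definition is_sup (S : R -> Prop) (m : R) : Prop :=
  (forall x, S x -> x <= m) /\ (forall m', (forall x, S x -> x <= m') -> m <= m').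

Definition lamV (V : R -> R) (c : R) : R :=
  epsilon (inhabits 0) (is_inf (fun l => 0 < l /\ c < V l)).

Definition tauV (V : R -> R) (c : R) : R :=
  epsilon (inhabits 0)
    (is_sup (fun y => exists l, lamV V c <= l /\ 0 < l /\ y = ln (1 + V l) / l)).

(* Main.v *)
Require Import Defs.
From Stdlib Require Import Reals Lra Lia ClassicalEpsilon.
Open Scope R_scope.

Lemma exp_le x y : x <= y -> exp x <= exp y.
Proof. intros [H|H]. left; apply exp_increasing; auto. subst; lra. Qed.

Lemma ln_le x y : 0 < x -> x <= y -> ln x <= ln y.
Proof. intros Hx [H|H]. left; apply ln_increasing; auto. subst; lra. Qed.

Lemma expm_le1 x : 0 <= x -> exp (- x) <= 1.
Proof. intros H. rewrite <- exp_0. apply exp_le. lra. Qed.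

Lemma exp_diff x y : 0 <= x <= y -> exp (-x) - exp (-y) <= y - x.
Proof.
  intros [H1 H2].
  replace (- y) with (- x + - (y - x)) by ring. rewrite exp_plus.
  pose proof (exp_ineq1_le (- (y - x))). pose proof (expm_le1 x H1).
  pose proof (exp_pos (-x)). nra.
Qed.

Fixpoint psum (w : R -> R -> R) (p : nat -> R) (n : nat) : R :=
  match n with O => 0 | S m => psum w p m + w (p m) (p (S m)) end.

Definition lw (t : R) (V : R -> R) (x y : R) := exp (- (t * y)) * (V y - V x).
Definition uw (t : R) (V : R -> R) (x y : R) := exp (- (t * x)) * (V y - V x).

Definition wpart (a b : R) (n : nat) (p : nat -> R) : Prop :=
  p O = a /\ p n = b /\ forall k, (k < n)%nat -> p k <= p (S k).

Lemma psum_ext w p q n : (forall k, (k <= n)%nat -> p k = q k) -> psum w p n = psum w q n.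
Proof.
  induction n; intros H; simpl; auto.
  rewrite IHn by (intros; apply H; lia). rewrite (H n), (H (S n)) by lia. reflexivity.
Qed.

Lemma psum_le w1 w2 p n : (forall k, (k < n)%nat -> w1 (p k) (p (S k)) <= w2 (p k) (p (S k))) ->
  psum w1 p n <= psum w2 p n.
Proof.
  induction n; intros H; simpl. lra.
  pose proof (H n ltac:(lia)). pose proof (IHn ltac:(intros; apply H; lia)). lra.
Qed.

Lemma psum_nonneg w p n : (forall k, (k < n)%nat -> 0 <= w (p k) (p (S k))) -> 0 <= psum w p n.
Proof.
  induction n; intros H; simpl. lra.
  pose proof (H n ltac:(lia)). pose proof (IHn ltac:(intros; apply H; lia)). lra.
Qed.

Lemma pmono n p : (forall k, (k < n)%nat -> p k <= p (S k)) ->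
  forall i j, (i <= j <= n)%nat -> p i <= p j.
Proof.
  intros H i j. induction j; intros Hij.
  - replace i with O by lia. lra.
  - destruct (Nat.eq_dec i (S j)). subst; lra.
    pose proof (IHj ltac:(lia)). pose proof (H j ltac:(lia)). lra.
Qed.

Lemma wpart_in a b n p : wpart a b n p -> forall k, (k <= n)%nat -> a <= p k <= b.
Proof.
  intros [H0 [Hn Hs]] k Hk. split.
  - rewrite <- H0. apply (pmono n); auto; lia.
  - rewrite <- Hn. apply (pmono n); auto; lia.
Qed.

Definition cc (p : nat -> R) (n : nat) (q : nat -> R) : nat -> R :=
  fun k => if Nat.leb k n then p k else q (k - n)%nat.

Lemma cc_left p n q k : (k <= n)%nat -> cc p n q k = p k.
Proof. intros H. unfold cc. destruct (Nat.leb_spec k n); [reflexivity|lia]. Qed.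

Lemma cc_right p n q m : p n = q O -> cc p n q (n + m)%nat = q m.
Proof.
  intros H. unfold cc. destruct (Nat.leb_spec (n+m) n).
  - replace m with O by lia. rewrite Nat.add_0_r. auto.
  - f_equal. lia.
Qed.

Lemma psum_cc w p n q m : p n = q O ->
  psum w (cc p n q) (n + m) = psum w p n + psum w q m.
Proof.
  intros H. induction m.
  - rewrite Nat.add_0_r. simpl. rewrite Rplus_0_r. apply psum_ext. intros; apply cc_left; auto.
  - rewrite Nat.add_succ_r. simpl. rewrite IHm.
    rewrite (cc_right p n q m H).
    replace (S (n + m)) with (n + S m)%nat by lia. rewrite (cc_right p n q (S m) H). ring.
Qed.

Lemma wpart_cc a c b n m p q : wpart a c n p -> wpart c b m q -> wpart a b (n + m) (cc p n q).
Proof.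
  intros [Hp0 [Hpn Hps]] [Hq0 [Hqm Hqs]].
  assert (E : p n = q O) by congruence.
  split; [|split].
  - rewrite cc_left by lia. auto.
  - rewrite cc_right; auto.
  - intros k Hk. destruct (Nat.le_gt_cases (S k) n).
    + rewrite !cc_left by lia. apply Hps; lia.
    + destruct (Nat.eq_dec k n).
      * subst. rewrite cc_left by lia. replace (S n) with (n + 1)%nat by lia.
        rewrite cc_right by auto. rewrite E. apply Hqs. lia.
      * replace k with (n + (k - n))%nat by lia. replace (S (n + (k - n))) with (n + S (k - n))%nat by lia.
        rewrite !cc_right by auto. apply Hqs. lia.
Qed.

Definition tp (x y : R) : nat -> R := fun k => match k with O => x | _ => y end.

Lemma wpart_tp x y : x <= y -> wpart x y 1 (tp x y).
Proof. intros H. split; [reflexivity|split;[reflexivity|]]. intros k Hk. replace k with O by lia. simpl. auto. Qed.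

Lemma psum_tp w x y : psum w (tp x y) 1 = w x y.
Proof. simpl. ring. Qed.

Definition gr (x0 h : R) : nat -> R := fun k => x0 + INR k * h.

Lemma wpart_gr x0 h N : 0 <= h -> wpart x0 (x0 + INR N * h) N (gr x0 h).
Proof.
  intros H. split; [|split]; unfold gr.
  - simpl. ring.
  - reflexivity.
  - intros k _. rewrite S_INR. nra.
Qed.

Lemma Rdiv_le_0_compat x y : 0 <= x -> 0 < y -> 0 <= x / y.
Proof. intros. unfold Rdiv. apply Rmult_le_pos; auto. apply Rlt_le, Rinv_0_lt_compat; auto. Qed.
Definition Vmono (V : R -> R) := forall x y, 0 < x -> x <= y -> V x <= V y.

Lemma expt_dec t x y : 0 <= t -> x <= y -> exp (- (t * y)) <= exp (- (t * x)).
Proof. intros. apply exp_le. nra. Qed.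

Lemma usum_nonneg t V a b n p : Vmono V -> 0 < a -> wpart a b n p -> 0 <= psum (uw t V) p n.
Proof.
  intros HV Ha Hp. apply psum_nonneg. intros k Hk. unfold uw.
  pose proof (wpart_in _ _ _ _ Hp k ltac:(lia)). destruct Hp as [_ [_ Hs]].
  pose proof (HV (p k) (p (S k)) ltac:(lra) (Hs k Hk)). pose proof (exp_pos (- (t * p k))). nra.
Qed.

Lemma lsum_nonneg t V a b n p : Vmono V -> 0 < a -> wpart a b n p -> 0 <= psum (lw t V) p n.
Proof.
  intros HV Ha Hp. apply psum_nonneg. intros k Hk. unfold lw.
  pose proof (wpart_in _ _ _ _ Hp k ltac:(lia)). destruct Hp as [_ [_ Hs]].
  pose proof (HV (p k) (p (S k)) ltac:(lra) (Hs k Hk)). pose proof (exp_pos (- (t * p (S k)))). nra.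
Qed.

Lemma trunc t V a : 0 <= t -> Vmono V -> 0 < a ->
  forall m b q, wpart a b m q -> forall c, a <= c <= b ->
  exists m' q', wpart a c m' q' /\
    psum (uw t V) q' m' + exp (- (t * b)) * (V b - V c) <= psum (uw t V) q m.
Proof.
  intros Ht HV Ha. induction m; intros b q Hq c Hc.
  - destruct Hq as [H0 [Hn Hs]]. assert (b = a) by congruence. subst b.
    assert (c = a) by lra. subst c. exists O, q. split. { split; [exact H0|split;[exact H0|intros; lia]]. }
    simpl. rewrite H0. replace (V a - V a) with 0 by ring. lra.
  - set (d := q m).
    assert (Hd : a <= d <= b) by (apply (wpart_in _ _ _ _ Hq); lia).
    assert (Hqd : wpart a d m q).
    { destruct Hq as [H0 [Hn Hs]]. split; [exact H0|split; [reflexivity|intros; apply Hs; lia]]. }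
    destruct (Rle_or_lt d c) as [Hdc|Hdc].
    + exists (S m), (fun k => if Nat.eqb k (S m) then c else q k). split.
      * destruct Hq as [H0 [Hn Hs]]. split; [|split].
        -- simpl. auto.
        -- rewrite Nat.eqb_refl. auto.
        -- intros k Hk. destruct (Nat.eqb_spec k (S m)); [lia|].
           destruct (Nat.eqb_spec (S k) (S m)).
           ++ assert (k = m) by lia. subst k. fold d. lra.
           ++ apply Hs; lia.
      * simpl. rewrite Nat.eqb_refl. destruct (Nat.eqb_spec m (S m)); [lia|].
        rewrite (psum_ext _ _ q m).
        2:{ intros k Hk. destruct (Nat.eqb_spec k (S m)); [lia|auto]. }
        fold d. unfold uw. destruct Hq as [H0 [Hn Hs]]. rewrite Hn.
        pose proof (expt_dec t d b Ht (proj2 Hd)).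
        pose proof (HV c b ltac:(lra) ltac:(lra)). pose proof (exp_pos (- (t*b))).
        assert (0 <= (exp(-(t*d)) - exp(-(t*b))) * (V b - V c)) by (apply Rmult_le_pos; lra).
      rewrite Rplus_assoc; apply Rplus_le_compat_l. unfold d in *. lra.
    + destruct (IHm d q Hqd c ltac:(lra)) as [m' [q' [Hp' Hs']]].
      exists m', q'. split; auto. simpl. fold d. unfold uw in *. destruct Hq as [H0 [Hn Hs]]. rewrite Hn.
      pose proof (expt_dec t d b Ht (proj2 Hd)).
      pose proof (HV d b ltac:(lra) ltac:(lra)). pose proof (HV c d ltac:(lra) ltac:(lra)).
      pose proof (exp_pos (- (t*b))).
      pose proof (HV c b ltac:(lra) ltac:(lra)).
      assert (0 <= (exp(-(t*d)) - exp(-(t*b))) * (V b - V c)) by (apply Rmult_le_pos; lra). nra.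
Qed.

Lemma low_le_up t V a : 0 <= t -> Vmono V -> 0 < a ->
  forall n b p, wpart a b n p -> forall m q, wpart a b m q ->
  psum (lw t V) p n <= psum (uw t V) q m.
Proof.
  intros Ht HV Ha. induction n; intros b p Hp m q Hq.
  - simpl. eapply usum_nonneg; eauto.
  - set (c := p n).
    assert (Hc : a <= c <= b) by (apply (wpart_in _ _ _ _ Hp); lia).
    destruct (trunc t V a Ht HV Ha m b q Hq c Hc) as [m' [q' [Hq' Hs]]].
    assert (Hpc : wpart a c n p).
    { destruct Hp as [H0 [Hn Hs']]. split; [exact H0|split; [reflexivity|intros; apply Hs'; lia]]. }
    pose proof (IHn c p Hpc m' q' Hq'). simpl. fold c. destruct Hp as [H0 [Hn _]].
    replace (lw t V c (p (S n))) with (exp (- (t * b)) * (V b - V c)) by (unfold lw; rewrite Hn; reflexivity). lra.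
Qed.
Lemma tag_wpart a b n p xi : tagged_partition a b n p xi -> wpart a b n p.
Proof. intros [H0 [Hn Hs]]. split; auto. split; auto. intros k Hk. destruct (Hs k Hk); lra. Qed.

Lemma rs_between t V a b n p xi : 0 <= t -> Vmono V -> 0 < a -> tagged_partition a b n p xi ->
  psum (lw t V) p n <= rs_sum (fun l => exp (- (t * l))) V p xi n <= psum (uw t V) p n.
Proof.
  intros Ht HV Ha Hp. pose proof (wpart_in _ _ _ _ (tag_wpart _ _ _ _ _ Hp)) as Hin.
  destruct Hp as [H0 [Hn Hs]]. clear H0 Hn.
  induction n; simpl. lra.
  assert (IH : psum (lw t V) p n <= rs_sum (fun l => exp (- (t * l))) V p xi n <= psum (uw t V) p n).
  { apply IHn. intros; apply Hs; lia. intros; apply Hin; lia. }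
  destruct (Hs n ltac:(lia)) as [Hlt [Hx1 Hx2]]. pose proof (Hin n ltac:(lia)).
  pose proof (HV (p n) (p (S n)) ltac:(lra) ltac:(lra)).
  pose proof (expt_dec t (xi n) (p (S n)) Ht Hx2). pose proof (expt_dec t (p n) (xi n) Ht Hx1).
  unfold lw, uw.
  assert (exp (- (t * p (S n))) * (V (p (S n)) - V (p n)) <= exp (- (t * xi n)) * (V (p (S n)) - V (p n))) by (apply Rmult_le_compat_r; lra).
  assert (exp (- (t * xi n)) * (V (p (S n)) - V (p n)) <= exp (- (t * p n)) * (V (p (S n)) - V (p n))) by (apply Rmult_le_compat_r; lra).
  unfold lw, uw in IH. lra.
Qed.

Lemma psum_diff t s V p n K : (forall k, (k < n)%nat -> exp (- (t * p k)) - exp (- (s * p (S k))) <= K) ->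
  (forall k, (k < n)%nat -> V (p k) <= V (p (S k))) ->
  psum (uw t V) p n - psum (lw s V) p n <= K * (V (p n) - V (p O)).
Proof.
  intros H1 H2. induction n; simpl. lra.
  assert (IH : psum (uw t V) p n - psum (lw s V) p n <= K * (V (p n) - V (p O))).
  { apply IHn; intros; [apply H1|apply H2]; lia. }
  pose proof (H1 n ltac:(lia)). pose proof (H2 n ltac:(lia)). unfold uw, lw in *.
  assert ((exp (- (t * p n)) - exp (- (s * p (S n)))) * (V (p (S n)) - V (p n)) <= K * (V (p (S n)) - V (p n))) by (apply Rmult_le_compat_r; lra).
  lra.
Qed.

Lemma wpart_steps V a b n p : Vmono V -> 0 < a -> wpart a b n p -> forall k, (k < n)%nat -> V (p k) <= V (p (S k)).
Proof.
  intros HV Ha Hp k Hk. pose proof (wpart_in _ _ _ _ Hp k ltac:(lia)). destruct Hp as [_ [_ Hs]].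
  apply HV; [lra|]. apply Hs; auto.
Qed.

Lemma udiff_mesh t V a b n p h : 0 <= t -> Vmono V -> 0 < a -> wpart a b n p ->
  (forall k, (k < n)%nat -> p (S k) - p k <= h) ->
  psum (uw t V) p n - psum (lw t V) p n <= t * h * (V b - V a).
Proof.
  intros Ht HV Ha Hp Hm. pose proof (wpart_in _ _ _ _ Hp) as Hin.
  assert (E : V b - V a = V (p n) - V (p O)) by (destruct Hp as [H0 [Hn _]]; rewrite H0, Hn; auto).
  rewrite E. apply psum_diff.
  - intros k Hk. pose proof (Hin k ltac:(lia)). pose proof (Hin (S k) ltac:(lia)).
    destruct Hp as [_ [_ Hs]]. pose proof (Hs k Hk). pose proof (Hm k Hk).
    pose proof (exp_diff (t * p k) (t * p (S k)) ltac:(split; nra)). nra.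
  - eapply wpart_steps; eauto.
Qed.

Lemma unif_part a b d : a < b -> 0 < d -> exists n p, tagged_partition a b n p p /\ mesh_lt n p d.
Proof.
  intros Hab Hd. destruct (INR_unbounded ((b - a) / d)) as [n Hn].
  assert (Hn0 : 0 < INR n). { assert (0 < (b-a)/d) by (apply Rdiv_lt_0_compat; lra). lra. }
  set (h := (b - a) / INR n).
  assert (Hh : 0 < h) by (apply Rdiv_lt_0_compat; lra).
  assert (Hhd : h < d).
  { unfold h. apply (Rmult_lt_reg_r (INR n)); auto. unfold Rdiv. rewrite Rmult_assoc, Rinv_l by lra.
    rewrite Rmult_1_r. apply (Rmult_lt_reg_r (/ d)). apply Rinv_0_lt_compat; lra.
    replace (d * INR n * / d) with (INR n) by (field; lra). lra. }
  exists n, (gr a h). split.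
  - split; [|split]; unfold gr.
    + simpl. ring.
    + unfold h. field. lra.
    + intros k _. rewrite S_INR. split; nra.
  - intros k _. unfold gr. rewrite S_INR. lra.
Qed.

Lemma Vpart_nonneg V a b : Vmono V -> 0 < a -> a <= b -> 0 <= V b - V a.
Proof. intros HV Ha Hab. pose proof (HV a b Ha Hab). lra. Qed.

Lemma RS_bracket t V a b J : 0 <= t -> Vmono V -> 0 < a -> a < b ->
  is_RS_integral (fun l => exp (- (t * l))) V a b J ->
  (forall n p, wpart a b n p -> psum (lw t V) p n <= J) /\
  (forall n p, wpart a b n p -> J <= psum (uw t V) p n).
Proof.
  intros Ht HV Ha Hab HJ.
  assert (Hfine : forall e, 0 < e -> exists n q, wpart a b n q /\
     Rabs (rs_sum (fun l => exp (- (t * l))) V q q n - J) < e /\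
     psum (lw t V) q n <= rs_sum (fun l => exp (- (t * l))) V q q n <= psum (uw t V) q n /\
     psum (uw t V) q n - psum (lw t V) q n <= e).
  { intros e He. destruct (HJ e He) as [d [Hd Hd']].
    pose proof (Vpart_nonneg V a b HV Ha ltac:(lra)).
    set (d' := Rmin d (e / (t * (V b - V a) + 1))).
    assert (Hd'0 : 0 < d') by (apply Rmin_pos; auto; apply Rdiv_lt_0_compat; nra).
    destruct (unif_part a b d' Hab Hd'0) as [n [q [Hq Hm]]].
    exists n, q. split; [eapply tag_wpart; eauto|]. split.
    - apply Hd'; auto. intros k Hk. pose proof (Hm k Hk). pose proof (Rmin_l d (e / (t * (V b - V a) + 1))). fold d' in H1. lra.
    - split. apply (rs_between t V a b n q q); auto.
      assert (Hw : wpart a b n q) by (eapply tag_wpart; eauto).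
      pose proof (udiff_mesh t V a b n q d' Ht HV Ha Hw ltac:(intros k Hk; pose proof (Hm k Hk); lra)).
      assert (d' <= e / (t * (V b - V a) + 1)) by apply Rmin_r.
      assert (t * (V b - V a) * d' <= t * (V b - V a) * (e / (t * (V b - V a) + 1))) by (apply Rmult_le_compat_l; nra).
      assert (t * (V b - V a) * (e / (t * (V b - V a) + 1)) <= e).
      { unfold Rdiv. apply (Rmult_le_reg_r (t * (V b - V a) + 1)). nra.
        rewrite !Rmult_assoc, Rinv_l by nra. nra. }
      nra. }
  split.
  - intros n p Hp. apply Rle_plus_epsilon. intros e He.
    destruct (Hfine (e/2) ltac:(lra)) as [m [q [Hq [H1 [H2 H3]]]]].
    pose proof (low_le_up t V a Ht HV Ha n b p Hp m q Hq). apply Rabs_def2 in H1. lra.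
  - intros n p Hp. apply Rle_plus_epsilon. intros e He.
    destruct (Hfine (e/2) ltac:(lra)) as [m [q [Hq [H1 [H2 H3]]]]].
    pose proof (low_le_up t V a Ht HV Ha m b q Hq n p Hp). apply Rabs_def2 in H1. lra.
Qed.

Lemma RS_exists t V a b : 0 <= t -> Vmono V -> 0 < a -> a < b ->
  exists J, is_RS_integral (fun l => exp (- (t * l))) V a b J /\
    (forall M, (forall n p, wpart a b n p -> psum (lw t V) p n <= M) -> J <= M).
Proof.
  intros Ht HV Ha Hab.
  set (E := fun y => exists n p, wpart a b n p /\ y = psum (lw t V) p n).
  assert (Hb : bound E).
  { exists (psum (uw t V) (tp a b) 1). intros y [n [p [Hp ->]]].
    eapply low_le_up; eauto. apply wpart_tp; lra. }
  assert (Hne : exists y, E y) by (exists (psum (lw t V) (tp a b) 1); exists 1%nat, (tp a b); split; auto; apply wpart_tp; lra).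
  destruct (completeness E Hb Hne) as [J [HJ1 HJ2]].
  exists J. split.
  - intros e He. pose proof (Vpart_nonneg V a b HV Ha ltac:(lra)).
    exists (e / (t * (V b - V a) + 1)). split. apply Rdiv_lt_0_compat; nra.
    intros n p xi Hp Hm.
    pose proof (rs_between t V a b n p xi Ht HV Ha Hp).
    assert (Hw := tag_wpart _ _ _ _ _ Hp).
    assert (psum (lw t V) p n <= J) by (apply HJ1; exists n, p; auto).
    assert (J <= psum (uw t V) p n).
    { apply HJ2. intros y [m [q [Hq ->]]]. apply (low_le_up t V a Ht HV Ha m b q Hq n p Hw). }
    pose proof (udiff_mesh t V a b n p (e / (t * (V b - V a) + 1)) Ht HV Ha Hw ltac:(intros k Hk; pose proof (Hm k Hk); lra)).
    assert (t * (e / (t * (V b - V a) + 1)) * (V b - V a) < e).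
    { unfold Rdiv. apply (Rmult_lt_reg_r (t * (V b - V a) + 1)). nra.
      replace (t * (e * / (t * (V b - V a) + 1)) * (V b - V a) * (t * (V b - V a) + 1)) with
        (t * (V b - V a) * e * ((t * (V b - V a) + 1) * / (t * (V b - V a) + 1))) by ring.
      rewrite Rinv_r by nra. nra. }
    apply Rabs_def1; lra.
  - intros M HM. apply HJ2. intros y [n [p [Hp ->]]]. apply HM; auto.
Qed.
Definition V0prop (V : R -> R) := forall e, 0 < e -> exists d, 0 < d /\ forall y, 0 < y < d -> Rabs (V y) < e.
Definition VLprop (V : R -> R) (L : R) := forall e, 0 < e -> exists M, forall y, M < y -> Rabs (V y - L) < e.

Lemma V_nonneg V : Vmono V -> V0prop V -> forall x, 0 < x -> 0 <= V x.
Proof.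
  intros HV H0 x Hx. destruct (Rle_or_lt 0 (V x)) as [H|H]; auto.
  destruct (H0 (- V x) ltac:(lra)) as [d [Hd Hd']].
  set (y := Rmin d x / 2).
  assert (0 < Rmin d x) by (apply Rmin_pos; lra).
  assert (Hy : 0 < y < d) by (pose proof (Rmin_l d x); unfold y; lra).
  pose proof (Hd' y Hy). pose proof (HV y x ltac:(lra) ltac:(pose proof (Rmin_r d x); unfold y; lra)).
  apply Rabs_def2 in H2. lra.
Qed.

Lemma V_le_L V L : Vmono V -> VLprop V L -> forall x, 0 < x -> V x <= L.
Proof.
  intros HV HL x Hx. destruct (Rle_or_lt (V x) L) as [H|H]; auto.
  destruct (HL (V x - L) ltac:(lra)) as [M HM].
  set (y := Rmax M x + 1).
  pose proof (HM y ltac:(pose proof (Rmax_l M x); unfold y; lra)).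
  pose proof (HV x y Hx ltac:(pose proof (Rmax_r M x); unfold y; lra)).
  apply Rabs_def2 in H0. lra.
Qed.

Lemma ext_part a1 b1 n p a b : wpart a1 b1 n p -> a <= a1 -> b1 <= b ->
  wpart a b (1 + (n + 1)) (cc (tp a a1) 1 (cc p n (tp b1 b))) /\
  forall w, psum w (cc (tp a a1) 1 (cc p n (tp b1 b))) (1 + (n + 1)) = w a a1 + psum w p n + w b1 b.
Proof.
  intros Hp Ha Hb. destruct Hp as [H0 [Hn Hs]].
  assert (E1 : p n = tp b1 b O) by (simpl; auto).
  assert (E2 : tp a a1 1 = cc p n (tp b1 b) O) by (rewrite cc_left by lia; simpl; auto).
  split.
  - eapply wpart_cc. apply wpart_tp; auto.
    eapply wpart_cc. split; [exact H0|split; [exact Hn|exact Hs]]. apply wpart_tp; auto.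
  - intros w. rewrite psum_cc by auto. rewrite psum_cc by auto. rewrite !psum_tp. ring.
Qed.

Lemma LS_exists t V L : 0 <= t -> Vmono V -> V0prop V -> VLprop V L ->
  exists I, is_LS_integral (fun l => exp (- (t * l))) V I.
Proof.
  intros Ht HV H0 HL.
  set (E := fun y => exists a b n p, 0 < a /\ a < b /\ wpart a b n p /\ y = psum (lw t V) p n).
  assert (Hb : bound E).
  { exists L. intros y [a [b [n [p [Ha [Hab [Hp ->]]]]]]].
    eapply Rle_trans. apply (low_le_up t V a Ht HV Ha n b p Hp 1 (tp a b)). apply wpart_tp; lra.
    rewrite psum_tp. unfold uw. pose proof (V_nonneg V HV H0 a Ha). pose proof (V_le_L V L HV HL b ltac:(lra)).
    pose proof (HV a b Ha ltac:(lra)). pose proof (expm_le1 (t * a) ltac:(nra)). pose proof (exp_pos (- (t * a))). nra. }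
  assert (Hne : exists y, E y).
  { exists (psum (lw t V) (tp 1 2) 1). exists 1, 2, 1%nat, (tp 1 2). split; [lra|split;[lra|split;[apply wpart_tp; lra|auto]]]. }
  destruct (completeness E Hb Hne) as [I [HI1 HI2]].
  exists I. intros e He.
  assert (Hy : exists y, E y /\ I - e < y).
  { apply NNPP. intros Hc. assert (I <= I - e); [|lra]. apply HI2. intros y Hy.
    destruct (Rle_or_lt y (I - e)); auto. exfalso; apply Hc; exists y; auto. }
  destruct Hy as [y [[a1 [b1 [n [p [Ha1 [Hab1 [Hp ->]]]]]]] Hy]].
  exists a1, b1. split; auto. intros a b Ha Hb1.
  destruct (RS_exists t V a b Ht HV ltac:(lra) ltac:(lra)) as [J [HJ HJ']].
  exists J. split; auto.
  destruct (ext_part a1 b1 n p a b Hp ltac:(lra) ltac:(lra)) as [Hw Hs].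
  destruct (RS_bracket t V a b J Ht HV ltac:(lra) ltac:(lra) HJ) as [HL1 _].
  pose proof (HL1 _ _ Hw). rewrite Hs in H.
  assert (0 <= lw t V a a1) by (unfold lw; pose proof (HV a a1 ltac:(lra) ltac:(lra)); pose proof (exp_pos (- (t*a1))); nra).
  assert (0 <= lw t V b1 b) by (unfold lw; pose proof (HV b1 b ltac:(lra) ltac:(lra)); pose proof (exp_pos (- (t*b))); nra).
  assert (J <= I).
  { apply HJ'. intros m q Hq. apply HI1. exists a, b, m, q. split; [lra|split;[lra|split; auto]]. }
  apply Rabs_def1; lra.
Qed.

Lemma LapV_spec t V L : 0 <= t -> Vmono V -> V0prop V -> VLprop V L ->
  is_LS_integral (fun l => exp (- (t * l))) V (LapV V t).
Proof.
  intros. unfold LapV. apply epsilon_spec. eapply LS_exists; eauto.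
Qed.

Lemma LapV_bracket t V L a b n p : 0 <= t -> Vmono V -> V0prop V -> VLprop V L -> 0 < a -> wpart a b n p ->
  psum (lw t V) p n <= LapV V t /\ LapV V t <= psum (uw t V) p n + V a + (L - V b).
Proof.
  intros Ht HV H0 HL Ha Hp. pose proof (LapV_spec t V L Ht HV H0 HL) as HS.
  pose proof (wpart_in _ _ _ _ Hp) as Hin.
  assert (Hab : a <= b) by (pose proof (Hin n ltac:(lia)); lra).
  split; apply Rle_plus_epsilon; intros e He; destruct (HS e He) as [a0 [b0 [Ha0 Hab0]]];
    set (a' := Rmin a a0 / 2); set (b' := Rmax b b0 + 1);
    assert (Ha' : 0 < a' < a0 /\ a' < a) by (pose proof (Rmin_l a a0); pose proof (Rmin_r a a0);
      pose proof (Rmin_pos a a0 Ha Ha0); unfold a'; lra);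
    assert (Hb' : b0 < b' /\ b < b') by (pose proof (Rmax_l b b0); pose proof (Rmax_r b b0); unfold b'; lra);
    destruct (Hab0 a' b' ltac:(lra) ltac:(lra)) as [J [HJ HJe]]; apply Rabs_def2 in HJe;
    destruct (ext_part a b n p a' b' Hp ltac:(lra) ltac:(lra)) as [Hw Hs];
    destruct (RS_bracket t V a' b' J Ht HV ltac:(lra) ltac:(lra) HJ) as [HL1 HU1].
  - pose proof (HL1 _ _ Hw). rewrite Hs in H.
    assert (0 <= lw t V a' a) by (unfold lw; pose proof (HV a' a ltac:(lra) ltac:(lra)); pose proof (exp_pos (- (t*a))); nra).
    assert (0 <= lw t V b b') by (unfold lw; pose proof (HV b b' ltac:(lra) ltac:(lra)); pose proof (exp_pos (- (t*b'))); nra).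
    lra.
  - pose proof (HU1 _ _ Hw). rewrite Hs in H.
    assert (uw t V a' a <= V a).
    { unfold uw. pose proof (HV a' a ltac:(lra) ltac:(lra)). pose proof (V_nonneg V HV H0 a' ltac:(lra)).
      pose proof (expm_le1 (t * a') ltac:(nra)). pose proof (exp_pos (- (t*a'))). nra. }
    assert (uw t V b b' <= L - V b).
    { unfold uw. pose proof (HV b b' ltac:(lra) ltac:(lra)). pose proof (V_le_L V L HV HL b' ltac:(lra)).
      pose proof (expm_le1 (t * b) ltac:(nra)). pose proof (exp_pos (- (t*b))). nra. }
    lra.
Qed.
Lemma grid_part a b N : (0 < N)%nat -> a <= b ->
  wpart a b N (gr a ((b - a) / INR N)) /\
  (forall k, gr a ((b - a) / INR N) (S k) - gr a ((b - a) / INR N) k = (b - a) / INR N).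
Proof.
  intros HN Hab. assert (HN' : 0 < INR N) by (apply lt_0_INR; auto).
  assert (Hh : 0 <= (b - a) / INR N) by (apply Rdiv_le_0_compat; lra).
  split.
  - pose proof (wpart_gr a ((b - a) / INR N) N Hh).
    replace (a + INR N * ((b - a) / INR N)) with b in H by (field; lra). auto.
  - intros k. unfold gr. rewrite S_INR. ring.
Qed.

Lemma get_small V : V0prop V -> forall e, 0 < e -> forall u, 0 < u -> exists a, 0 < a < u /\ V a < e.
Proof.
  intros H0 e He u Hu. destruct (H0 e He) as [d [Hd Hd']].
  exists (Rmin d u / 2). assert (0 < Rmin d u) by (apply Rmin_pos; auto).
  pose proof (Rmin_l d u). pose proof (Rmin_r d u).
  split. lra. pose proof (Hd' (Rmin d u / 2) ltac:(lra)). apply Rabs_def2 in H3. lra.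
Qed.

Lemma get_big V L : VLprop V L -> forall e, 0 < e -> forall u, exists b, u < b /\ L - V b < e.
Proof.
  intros HL e He u. destruct (HL e He) as [M HM].
  exists (Rmax M u + 1). pose proof (Rmax_l M u). pose proof (Rmax_r M u).
  split. lra. pose proof (HM (Rmax M u + 1) ltac:(lra)). apply Rabs_def2 in H1. lra.
Qed.

Lemma Lap_U2 t V L a : 0 <= t -> Vmono V -> V0prop V -> VLprop V L -> 0 < a ->
  LapV V t <= V a + exp (- (t * a)) * (L - V a).
Proof.
  intros Ht HV H0 HL Ha. apply Rle_plus_epsilon. intros e He.
  destruct (get_big V L HL e He a) as [b [Hb Hb']].
  destruct (LapV_bracket t V L a b 1 (tp a b) Ht HV H0 HL Ha (wpart_tp a b ltac:(lra))) as [_ H].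
  rewrite psum_tp in H. unfold uw in H. pose proof (V_le_L V L HV HL b ltac:(lra)).
  pose proof (exp_pos (- (t * a))).
  assert (exp (- (t * a)) * (V b - V a) <= exp (- (t * a)) * (L - V a)) by (apply Rmult_le_compat_l; lra).
  lra.
Qed.

Lemma Lap_LB t V L l : 0 <= t -> Vmono V -> V0prop V -> VLprop V L -> 0 < l ->
  exp (- (t * l)) * V l <= LapV V t.
Proof.
  intros Ht HV H0 HL Hl. apply Rle_plus_epsilon. intros e He.
  destruct (get_small V H0 e He l Hl) as [a [Ha Ha']].
  destruct (LapV_bracket t V L a l 1 (tp a l) Ht HV H0 HL ltac:(lra) (wpart_tp a l ltac:(lra))) as [H _].
  rewrite psum_tp in H. unfold lw in H. pose proof (V_nonneg V HV H0 a ltac:(lra)).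
  pose proof (expm_le1 (t * l) ltac:(nra)). pose proof (exp_pos (- (t * l))).
  nra.
Qed.

Lemma Lap0_le t V L : 0 <= t -> Vmono V -> V0prop V -> VLprop V L -> LapV V t <= L.
Proof.
  intros Ht HV H0 HL. pose proof (Lap_U2 t V L 1 Ht HV H0 HL ltac:(lra)).
  pose proof (V_nonneg V HV H0 1 ltac:(lra)). pose proof (V_le_L V L HV HL 1 ltac:(lra)).
  pose proof (expm_le1 (t * 1) ltac:(nra)). pose proof (exp_pos (- (t * 1))). nra.
Qed.

Lemma Lap_decay V L : Vmono V -> V0prop V -> VLprop V L -> forall eps, 0 < eps ->
  exists t, 0 <= t /\ LapV V t <= eps.
Proof.
  intros HV H0 HL eps He.
  destruct (get_small V H0 (eps/2) ltac:(lra) 1 ltac:(lra)) as [a [Ha Ha']].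
  pose proof (V_nonneg V HV H0 a ltac:(lra)). pose proof (V_le_L V L HV HL a ltac:(lra)).
  set (K := 2 * (L + 1) / eps).
  assert (HK : 0 < K) by (unfold K; apply Rdiv_lt_0_compat; lra).
  exists (K / a). split. apply Rlt_le, Rdiv_lt_0_compat; lra.
  pose proof (Lap_U2 (K / a) V L a ltac:(apply Rlt_le, Rdiv_lt_0_compat; lra) HV H0 HL ltac:(lra)).
  replace (K / a * a) with K in H2 by (field; lra).
  assert (exp (- K) * (K) <= 1).
  { pose proof (exp_ineq1_le K). rewrite exp_Ropp. pose proof (exp_pos K).
    apply (Rmult_le_reg_r (exp K)); auto. rewrite Rmult_assoc, (Rmult_comm K), <- Rmult_assoc, Rinv_l by lra. lra. }
  assert (exp (- K) * (L - V a) <= eps / 2).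
  { assert (exp (- K) * (L + 1) <= eps / 2).
    { assert (HLK : L + 1 = K * (eps / 2)) by (unfold K; field; lra). rewrite HLK.
      pose proof (exp_pos (- K)). nra. }
    pose proof (exp_pos (- K)). nra. }
  lra.
Qed.

Lemma Lap_rcont t V L : 0 <= t -> Vmono V -> V0prop V -> VLprop V L -> forall e, 0 < e ->
  exists d, 0 < d /\ forall s, t <= s <= t + d -> LapV V t <= LapV V s + e.
Proof.
  intros Ht HV H0 HL e He.
  destruct (get_small V H0 (e/4) ltac:(lra) 1 ltac:(lra)) as [a [Ha Ha']].
  destruct (get_big V L HL (e/4) ltac:(lra) a) as [b [Hb Hb']].
  pose proof (V_nonneg V HV H0 a ltac:(lra)). pose proof (V_le_L V L HV HL b ltac:(lra)).
  pose proof (HV a b ltac:(lra) ltac:(lra)).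
  destruct (INR_unbounded (4 * t * (b - a) * (L + 1) / e)) as [N HN].
  assert (HN0 : (0 < N)%nat).
  { destruct N. simpl in HN. assert (0 <= 4 * t * (b - a) * (L + 1) / e). apply Rdiv_le_0_compat; [|lra].
    apply Rmult_le_pos; [|lra]. apply Rmult_le_pos; [|lra]. lra. lra. lia. }
  assert (HN' : 0 < INR N) by (apply lt_0_INR; auto).
  set (h := (b - a) / INR N).
  destruct (grid_part a b N HN0 ltac:(lra)) as [Hw Hst]. fold h in Hw, Hst.
  assert (Hth : t * h * (L + 1) <= e / 4).
  { unfold h. apply (Rmult_le_reg_r (INR N)); auto.
    replace (t * ((b - a) / INR N) * (L + 1) * INR N) with (t * (b - a) * (L + 1)) by (field; lra).
    assert (E: e/4 * (4 * t * (b - a) * (L + 1) / e) = t*(b-a)*(L+1)) by (field; lra).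
    assert (e/4 * (4 * t * (b - a) * (L + 1) / e) < e/4 * INR N) by (apply Rmult_lt_compat_l; lra).
    lra. }
  exists (e / (4 * (b * (L + 1) + 1))). split.
  { apply Rdiv_lt_0_compat; [lra|]. nra. }
  intros s Hs.
  pose proof (wpart_in _ _ _ _ Hw) as Hin.
  destruct (LapV_bracket t V L a b N (gr a h) Ht HV H0 HL ltac:(lra) Hw) as [_ HU].
  destruct (LapV_bracket s V L a b N (gr a h) ltac:(lra) HV H0 HL ltac:(lra) Hw) as [HLs _].
  assert (Hd : psum (uw t V) (gr a h) N - psum (lw s V) (gr a h) N <= (t * h + (s - t) * b) * (V (gr a h N) - V (gr a h O))).
  { apply psum_diff.
    - intros k Hk. pose proof (Hin k ltac:(lia)). pose proof (Hin (S k) ltac:(lia)). pose proof (Hst k).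
      assert (0 <= h) by (unfold h; apply Rdiv_le_0_compat; lra).
      assert (0 <= t * gr a h k) by nra.
      assert (t * gr a h k <= s * gr a h (S k)) by nra.
      pose proof (exp_diff (t * gr a h k) (s * gr a h (S k)) ltac:(split; lra)).
      assert (0 <= (s - t) * (b - gr a h (S k))) by (apply Rmult_le_pos; lra). nra.
    - intros k Hk; apply (wpart_steps V a b N (gr a h) HV ltac:(lra) Hw k Hk). }
  destruct Hw as [Hw0 [HwN _]]. rewrite Hw0, HwN in Hd.
  assert (Hsd : (s - t) * b * (L + 1) <= e / 4).
  { assert (0 <= s - t) by lra.
    assert ((s - t) * (4 * (b * (L + 1) + 1)) <= e).
    { assert (HbL : 0 < b * (L + 1) + 1) by nra.
      destruct Hs as [_ Hs]. assert (Hst' : s - t <= e / (4 * (b * (L + 1) + 1))) by lra.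
      apply (Rmult_le_compat_r (4 * (b * (L + 1) + 1))) in Hst'; [|lra].
      replace (e / (4 * (b * (L + 1) + 1)) * (4 * (b * (L + 1) + 1))) with e in Hst' by (field; lra). lra. }
    nra. }
  assert ((t * h + (s - t) * b) * (V b - V a) <= (t * h + (s - t) * b) * (L + 1)).
  { apply Rmult_le_compat_l. assert (0 <= h) by (unfold h; apply Rdiv_le_0_compat; lra). nra. lra. }
  lra.
Qed.
Lemma TV_spec V L : Vmono V -> V0prop V -> VLprop V L -> forall eps, 0 < eps ->
  0 <= TV V eps /\ LapV V (TV V eps) <= eps /\ forall s, 0 <= s -> LapV V s <= eps -> TV V eps <= s.
Proof.
  intros HV H0 HL eps He. unfold TV. apply epsilon_spec.
  set (E := fun x => 0 <= - x /\ LapV V (- x) <= eps).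
  assert (Hb : bound E) by (exists 0; intros x [Hx _]; lra).
  assert (Hne : exists x, E x).
  { destruct (Lap_decay V L HV H0 HL eps He) as [t [Ht Ht']]. exists (- t). unfold E. rewrite Ropp_involutive. auto. }
  destruct (completeness E Hb Hne) as [m [Hm1 Hm2]].
  assert (Hm0 : m <= 0) by (apply Hm2; intros x [Hx _]; lra).
  exists (- m). split; [lra|split].
  - apply Rle_plus_epsilon. intros e He'.
    destruct (Lap_rcont (- m) V L ltac:(lra) HV H0 HL e He') as [d [Hd Hd']].
    assert (Hs : exists s, 0 <= s /\ LapV V s <= eps /\ s < - m + d).
    { apply NNPP. intros Hc. assert (m <= m - d); [|lra]. apply Hm2. intros x [Hx1 Hx2].
      destruct (Rle_or_lt x (m - d)); auto. exfalso. apply Hc. exists (- x). split; [lra|split; [auto|lra]]. }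
    destruct Hs as [s [Hs1 [Hs2 Hs3]]].
    assert (- m <= s).
    { assert (- s <= m) by (apply Hm1; unfold E; rewrite Ropp_involutive; auto). lra. }
    pose proof (Hd' s ltac:(lra)). lra.
  - intros s Hs Hs'. assert (- s <= m) by (apply Hm1; unfold E; rewrite Ropp_involutive; auto). lra.
Qed.

Lemma TV_le V L eps t : Vmono V -> V0prop V -> VLprop V L -> 0 < eps -> 0 <= t -> LapV V t <= eps -> TV V eps <= t.
Proof. intros HV H0 HL He Ht H. destruct (TV_spec V L HV H0 HL eps He) as [_ [_ H3]]. auto. Qed.

Lemma TV_mono V L x y : Vmono V -> V0prop V -> VLprop V L -> 0 < x -> x <= y -> TV V y <= TV V x.
Proof.
  intros HV H0 HL Hx Hxy. destruct (TV_spec V L HV H0 HL x Hx) as [H1 [H2 _]].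
  apply (TV_le V L); auto; lra.
Qed.

Lemma inf_exists (S : R -> Prop) : (exists x, S x) -> (exists m, forall x, S x -> m <= x) -> exists i, is_inf S i.
Proof.
  intros [x Hx] [m Hm].
  set (E := fun y => S (- y)).
  assert (Hb : bound E) by (exists (- m); intros y Hy; pose proof (Hm _ Hy); lra).
  assert (Hne : exists y, E y) by (exists (- x); unfold E; rewrite Ropp_involutive; auto).
  destruct (completeness E Hb Hne) as [s [Hs1 Hs2]].
  exists (- s). split.
  - intros z Hz. assert (- z <= s) by (apply Hs1; unfold E; rewrite Ropp_involutive; auto). lra.
  - intros m' Hm'. assert (s <= - m'); [|lra]. apply Hs2. intros y Hy. pose proof (Hm' _ Hy). lra.
Qed.

Definition Vrcprop (V : R -> R) := forall x, 0 < x -> forall e, 0 < e -> exists d, 0 < d /\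
       forall y, x <= y < x + d -> Rabs (V y - V x) < e.

Lemma lam_spec V L c : Vmono V -> V0prop V -> VLprop V L -> 0 < c < L ->
  is_inf (fun l => 0 < l /\ c < V l) (lamV V c).
Proof.
  intros HV H0 HL Hc. unfold lamV. apply epsilon_spec. apply inf_exists.
  - destruct (get_big V L HL (L - c) ltac:(lra) 0) as [b [Hb Hb']]. exists b. split; lra.
  - exists 0. intros x [Hx _]. lra.
Qed.

Lemma lam_pos V L c : Vmono V -> V0prop V -> VLprop V L -> 0 < c < L -> 0 < lamV V c.
Proof.
  intros HV H0 HL Hc. destruct (lam_spec V L c HV H0 HL Hc) as [_ H2].
  destruct (H0 c ltac:(lra)) as [d [Hd Hd']].
  assert (d <= lamV V c); [|lra]. apply H2. intros x [Hx Hx'].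
  destruct (Rle_or_lt d x); auto. pose proof (Hd' x ltac:(lra)). apply Rabs_def2 in H1. lra.
Qed.

Lemma lam_below V L c l : Vmono V -> V0prop V -> VLprop V L -> 0 < c < L -> 0 < l < lamV V c -> V l <= c.
Proof.
  intros HV H0 HL Hc Hl. destruct (lam_spec V L c HV H0 HL Hc) as [H1 _].
  destruct (Rle_or_lt (V l) c); auto. pose proof (H1 l ltac:(split; lra)). lra.
Qed.

Lemma lam_at V L c : Vmono V -> V0prop V -> VLprop V L -> Vrcprop V -> 0 < c < L -> c <= V (lamV V c).
Proof.
  intros HV H0 HL Hrc Hc. pose proof (lam_pos V L c HV H0 HL Hc) as Hp.
  destruct (lam_spec V L c HV H0 HL Hc) as [H1 H2].
  destruct (Rle_or_lt c (V (lamV V c))) as [H|H]; auto.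
  destruct (Hrc _ Hp (c - V (lamV V c)) ltac:(lra)) as [d [Hd Hd']].
  assert (lamV V c + d <= lamV V c); [|lra]. apply H2. intros x [Hx Hx'].
  pose proof (H1 x ltac:(split; auto)).
  destruct (Rle_or_lt (lamV V c + d) x) as [Hxx|Hxx]; auto. pose proof (Hd' x ltac:(lra)) as Hab. apply Rabs_def2 in Hab. lra.
Qed.

Lemma tau_spec V L c : Vmono V -> V0prop V -> VLprop V L -> 0 < c < L ->
  is_sup (fun y => exists l, lamV V c <= l /\ 0 < l /\ y = ln (1 + V l) / l) (tauV V c).
Proof.
  intros HV H0 HL Hc. pose proof (lam_pos V L c HV H0 HL Hc) as Hp.
  unfold tauV. apply epsilon_spec.
  set (E := fun y => exists l, lamV V c <= l /\ 0 < l /\ y = ln (1 + V l) / l).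
  assert (Hb : bound E).
  { exists (ln (1 + L) / lamV V c). intros y [l [Hl1 [Hl2 ->]]].
    pose proof (V_nonneg V HV H0 l Hl2). pose proof (V_le_L V L HV HL l Hl2).
    assert (0 <= ln (1 + V l)) by (rewrite <- ln_1; apply ln_le; lra).
    assert (ln (1 + V l) <= ln (1 + L)) by (apply ln_le; lra).
    unfold Rdiv. apply Rle_trans with (ln (1 + L) * / l).
    apply Rmult_le_compat_r; [apply Rlt_le, Rinv_0_lt_compat; lra| lra].
    apply Rmult_le_compat_l; [lra|]. apply Rinv_le_contravar; lra. }
  assert (Hne : exists y, E y) by (exists (ln (1 + V (lamV V c)) / lamV V c); exists (lamV V c); split; [lra|split; auto]).
  destruct (completeness E Hb Hne) as [s [Hs1 Hs2]].
  exists s. split; auto.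
Qed.

Lemma V_le_exp V L c l : Vmono V -> V0prop V -> VLprop V L -> 0 < c < L -> lamV V c <= l ->
  V l <= exp (tauV V c * l) - 1.
Proof.
  intros HV H0 HL Hc Hl. pose proof (lam_pos V L c HV H0 HL Hc) as Hp.
  destruct (tau_spec V L c HV H0 HL Hc) as [H1 _].
  pose proof (H1 (ln (1 + V l) / l) ltac:(exists l; split; [lra|split; [lra|auto]])).
  pose proof (V_nonneg V HV H0 l ltac:(lra)).
  assert (ln (1 + V l) <= tauV V c * l).
  { apply (Rmult_le_compat_r l) in H; [|lra]. unfold Rdiv in H. rewrite Rmult_assoc, Rinv_l in H by lra. lra. }
  apply exp_le in H3. rewrite exp_ln in H3 by lra. lra.
Qed.

Lemma tau_least V L c M : Vmono V -> V0prop V -> VLprop V L -> 0 < c < L ->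
  (forall l, lamV V c <= l -> 0 < l -> ln (1 + V l) / l <= M) -> tauV V c <= M.
Proof.
  intros HV H0 HL Hc H. destruct (tau_spec V L c HV H0 HL Hc) as [_ H2]. apply H2.
  intros y [l [H3 [H4 ->]]]. auto.
Qed.

Lemma tau_lam V L c : Vmono V -> V0prop V -> VLprop V L -> Vrcprop V -> 0 < c < L ->
  ln (1 + c) <= tauV V c * lamV V c.
Proof.
  intros HV H0 HL Hrc Hc. pose proof (lam_pos V L c HV H0 HL Hc) as Hp.
  destruct (tau_spec V L c HV H0 HL Hc) as [H1 _].
  pose proof (H1 (ln (1 + V (lamV V c)) / lamV V c) ltac:(exists (lamV V c); split; [lra|split; [lra|auto]])).
  pose proof (lam_at V L c HV H0 HL Hrc Hc).
  assert (ln (1 + c) <= ln (1 + V (lamV V c))) by (apply ln_le; lra).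
  apply (Rmult_le_compat_r (lamV V c)) in H; [|lra]. unfold Rdiv in H. rewrite Rmult_assoc, Rinv_l in H by lra. lra.
Qed.
Lemma claim2 V L c : Vmono V -> V0prop V -> VLprop V L -> Vrcprop V -> 0 < c < L ->
  tauV V c <= TV V (c / (1 + c)).
Proof.
  intros HV H0 HL Hrc Hc.
  assert (Hcc : 0 < c / (1 + c)) by (apply Rdiv_lt_0_compat; lra).
  destruct (TV_spec V L HV H0 HL _ Hcc) as [HT1 [HT2 _]].
  set (T := TV V (c / (1 + c))) in *.
  apply (tau_least V L); auto. intros l Hl Hl0.
  pose proof (lam_at V L c HV H0 HL Hrc Hc).
  pose proof (lam_pos V L c HV H0 HL Hc).
  pose proof (HV _ _ H1 Hl). set (v := V l) in *.
  pose proof (Lap_LB T V L l HT1 HV H0 HL Hl0). fold v in H3.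
  set (E := exp (- (T * l))) in *.
  assert (HE : 0 < E) by apply exp_pos.
  assert (H4 : E * v * (1 + c) <= c).
  { apply (Rmult_le_reg_r (/ (1 + c))). apply Rinv_0_lt_compat; lra.
    replace (E * v * (1 + c) * / (1 + c)) with (E * v) by (field; lra). unfold Rdiv in HT2. lra. }
  assert (H5 : E * (1 + v) <= 1).
  { assert (E * (1 + v) * (v * (1 + c)) <= 1 * (v * (1 + c))) by nra.
    apply Rmult_le_reg_r in H5; [auto|nra]. }
  assert (H6 : 1 + v <= exp (T * l)).
  { unfold E in H5. rewrite exp_Ropp in H5. pose proof (exp_pos (T * l)).
    apply (Rmult_le_compat_r (exp (T * l))) in H5; [|lra].
    rewrite Rmult_comm, <- Rmult_assoc, Rinv_r, Rmult_1_l in H5 by lra. lra. }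
  apply ln_le in H6; [|lra]. rewrite ln_exp in H6.
  apply (Rmult_le_reg_r l); auto. unfold Rdiv. rewrite Rmult_assoc, Rinv_l by lra. lra.
Qed.

Lemma abel t V W p M :
  (forall j, (j < M)%nat -> V (p (S j)) <= W (p (S j))) ->
  (forall j, (j < M)%nat -> exp (- (t * p (S j))) <= exp (- (t * p j))) ->
  psum (uw t V) p (S M) <= exp (- (t * p M)) * V (p (S M)) - exp (- (t * p O)) * V (p O) +
     psum (fun x y => W y * (exp (- (t * x)) - exp (- (t * y)))) p M.
Proof.
  intros H1 H2. induction M.
  - simpl. unfold uw. lra.
  - assert (IH := IHM ltac:(intros; apply H1; lia) ltac:(intros; apply H2; lia)).
    change (psum (uw t V) p (S (S M))) with (psum (uw t V) p (S M) + uw t V (p (S M)) (p (S (S M)))).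
    change (psum (fun x y => W y * (exp (- (t * x)) - exp (- (t * y)))) p (S M)) with
      (psum (fun x y => W y * (exp (- (t * x)) - exp (- (t * y)))) p M +
        W (p (S M)) * (exp (- (t * p M)) - exp (- (t * p (S M))))).
    pose proof (H1 M ltac:(lia)). pose proof (H2 M ltac:(lia)).
    assert (0 <= (W (p (S M)) - V (p (S M))) * (exp (- (t * p M)) - exp (- (t * p (S M))))) by (apply Rmult_le_pos; lra).
    unfold uw. unfold uw in IH. nra.
Qed.

Lemma psum_tele (G : R -> R) p n : psum (fun x y => G x - G y) p n = G (p O) - G (p n).
Proof. induction n; simpl. ring. rewrite IHn. ring. Qed.

Lemma exp_mul a b : exp a * exp b = exp (a + b).
Proof. rewrite exp_plus. reflexivity. Qed.
Lemma expm1_le x : exp x - 1 <= x * exp x.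
Proof.
  pose proof (exp_ineq1_le (- x)). pose proof (exp_pos x).
  assert (exp (- x) * exp x = 1) by (rewrite exp_mul; replace (- x + x) with 0 by ring; apply exp_0).
  nra.
Qed.

Lemma tau_pos V L c : Vmono V -> V0prop V -> VLprop V L -> Vrcprop V -> 0 < c < L -> 0 < tauV V c.
Proof.
  intros HV H0 HL Hrc Hc. pose proof (tau_lam V L c HV H0 HL Hrc Hc). pose proof (lam_pos V L c HV H0 HL Hc).
  assert (0 < ln (1 + c)) by (rewrite <- ln_1; apply ln_increasing; lra). nra.
Qed.

Lemma claim1_core V L c u : Vmono V -> V0prop V -> VLprop V L -> Vrcprop V -> 0 < c < L -> 0 < u ->
  LapV V (tauV V c + u) <= c + ((tauV V c + u) / u) * exp (- (u * lamV V c)).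
Proof.
  intros HV H0 HL Hrc Hc Hu.
  pose proof (tau_pos V L c HV H0 HL Hrc Hc) as Htau.
  pose proof (lam_pos V L c HV H0 HL Hc) as Hlam.
  set (tau := tauV V c) in *. set (lam := lamV V c) in *. set (t := tau + u).
  assert (Ht : 0 < t) by (unfold t; lra).
  apply Rle_plus_epsilon. intros eps He.
  set (kap := eps * u / (4 * (t + 1))).
  assert (Hkap : 0 < kap) by (unfold kap; apply Rdiv_lt_0_compat; nra).
  assert (Hlk : 0 < ln (1 + kap)) by (rewrite <- ln_1; apply ln_increasing; lra).
  set (h0 := ln (1 + kap) / (t + u + 1)).
  assert (Hh0 : 0 < h0) by (unfold h0; apply Rdiv_lt_0_compat; lra).
  set (h := Rmin h0 (lam / 2)).
  assert (Hh : 0 < h) by (unfold h; apply Rmin_pos; lra).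
  assert (Hhh0 : h <= h0) by apply Rmin_l.
  assert (Hhl : h <= lam / 2) by apply Rmin_r.
  assert (Heh : exp ((t + u) * h) <= 1 + kap).
  { assert ((t + u) * h <= ln (1 + kap)).
    { assert ((t + u + 1) * h0 = ln (1 + kap)) by (unfold h0; field; lra). nra. }
    apply exp_le in H. rewrite exp_ln in H by lra. auto. }
  set (p0 := lam - h).
  assert (Hp0 : 0 < p0) by (unfold p0; lra).
  destruct (get_small V H0 (eps / 4) ltac:(lra) p0 Hp0) as [a [Ha Ha']].
  destruct (get_big V L HL (eps / 4) ltac:(lra) p0) as [b0 [Hb0 Hb0']].
  set (x1 := 4 * (L + 1) / (eps * t)).
  destruct (INR_unbounded ((Rmax b0 x1 - p0) / h)) as [M HM].
  set (pM := p0 + INR M * h).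
  assert (HpM : Rmax b0 x1 < pM).
  { unfold pM. apply (Rmult_lt_compat_r h) in HM; auto.
    replace ((Rmax b0 x1 - p0) / h * h) with (Rmax b0 x1 - p0) in HM by (field; lra). lra. }
  pose proof (Rmax_l b0 x1). pose proof (Rmax_r b0 x1).
  set (b := p0 + INR (S M) * h).
  assert (Hb : b = pM + h) by (unfold b, pM; rewrite S_INR; ring).
  pose proof (V_nonneg V HV H0 a ltac:(lra)) as HVa.
  pose proof (V_le_L V L HV HL b ltac:(lra)) as HVb.
  pose proof (V_nonneg V HV H0 b0 ltac:(lra)) as HVb0.
  assert (HL0 : 0 <= L) by (pose proof (V_le_L V L HV HL b0 ltac:(lra)); lra).
  assert (E0 : tp a p0 1 = gr p0 h O) by (unfold gr; simpl; ring).
  assert (Hw : wpart a b (1 + S M) (cc (tp a p0) 1 (gr p0 h))).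
  { eapply wpart_cc. apply wpart_tp; lra. apply wpart_gr; lra. }
  destruct (LapV_bracket t V L a b _ _ ltac:(lra) HV H0 HL ltac:(lra) Hw) as [_ HU].
  rewrite psum_cc in HU by auto. rewrite psum_tp in HU.
  assert (Hfirst : uw t V a p0 <= c).
  { unfold uw. assert (Hpl : 0 < p0 < lam) by (unfold p0; lra).
    pose proof (lam_below V L c p0 HV H0 HL Hc Hpl).
    pose proof (HV a p0 ltac:(lra) ltac:(lra)). pose proof (expm_le1 (t * a) ltac:(nra)).
    pose proof (exp_pos (- (t * a))). nra. }
  assert (Habel := abel t V (fun x => exp (tau * x)) (gr p0 h) M).
  assert (HW : forall j, (j < M)%nat -> V (gr p0 h (S j)) <= (fun x => exp (tau * x)) (gr p0 h (S j))).
  { intros j Hj. assert (Hlj : lam <= gr p0 h (S j)) by (unfold gr, p0; rewrite S_INR; pose proof (pos_INR j); nra).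
    pose proof (V_le_exp V L c (gr p0 h (S j)) HV H0 HL Hc Hlj) as HH. fold tau in HH. simpl. lra. }
  assert (HG : forall j, (j < M)%nat -> exp (- (t * gr p0 h (S j))) <= exp (- (t * gr p0 h j))).
  { intros j Hj; apply expt_dec; [lra|]; unfold gr; rewrite S_INR; lra. }
  assert (Hab := Habel HW HG).
  clear Habel.
  change (gr p0 h M) with pM in Hab. change (gr p0 h (S M)) with b in Hab.
  replace (gr p0 h O) with p0 in Hab by (unfold gr; simpl; ring).
  assert (Hbd : exp (- (t * pM)) * V b <= eps / 4).
  { pose proof (exp_ineq1_le (t * pM)). rewrite exp_Ropp. pose proof (exp_pos (t * pM)).
    assert (x1 <= pM) by lra.
    assert (t * x1 = 4 * (L + 1) / eps) by (unfold x1; field; lra).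
    assert (4 * (L + 1) / eps <= t * pM) by nra.
    assert (L + 1 <= eps / 4 * (t * pM)).
    { apply (Rmult_le_compat_r (eps / 4)) in H6; [|lra].
      replace (4 * (L + 1) / eps * (eps / 4)) with (L + 1) in H6 by (field; lra). lra. }
    apply (Rmult_le_reg_r (exp (t * pM))); auto.
    rewrite Rmult_assoc, (Rmult_comm (V b)), <- Rmult_assoc, Rinv_l, Rmult_1_l by lra. nra. }
  assert (Hp0V : 0 <= exp (- (t * p0)) * V p0).
  { pose proof (V_nonneg V HV H0 p0 Hp0). pose proof (exp_pos (- (t * p0))). nra. }
  set (K := t * exp (t * h) / u).
  assert (Hsum : psum (fun x y => exp (tau * y) * (exp (- (t * x)) - exp (- (t * y)))) (gr p0 h) M <=
                 psum (fun x y => K * exp (- (u * x)) - K * exp (- (u * y))) (gr p0 h) M).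
  { apply psum_le. intros k Hk. set (y := gr p0 h (S k)). set (x := gr p0 h k).
    assert (Hx : x = y - h) by (unfold x, y, gr; rewrite S_INR; ring).
    rewrite Hx.
    assert (E1 : exp (tau * y) * exp (- (t * (y - h))) = exp (- (u * y)) * exp (t * h))
      by (rewrite !exp_mul; f_equal; unfold t; ring).
    assert (E2 : exp (tau * y) * exp (- (t * y)) = exp (- (u * y)))
      by (rewrite !exp_mul; f_equal; unfold t; ring).
    assert (E3 : exp (- (u * (y - h))) = exp (- (u * y)) * exp (u * h))
      by (rewrite !exp_mul; f_equal; ring).
    rewrite Rmult_minus_distr_l, E1, E2, E3.
    pose proof (expm1_le (t * h)). pose proof (exp_ineq1_le (u * h)).
    pose proof (exp_pos (- (u * y))). pose proof (exp_pos (t * h)).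
    assert (exp (t * h) - 1 <= K * (exp (u * h) - 1)).
    { unfold K. assert (t * h * exp (t * h) = t * exp (t * h) / u * (u * h)) by (field; lra).
      assert (0 <= t * exp (t * h) / u) by (apply Rdiv_le_0_compat; nra).
      nra. }
    nra. }
  rewrite (psum_tele (fun x => K * exp (- (u * x)))) in Hsum.
  replace (gr p0 h O) with p0 in Hsum by (unfold gr; simpl; ring).
  change (gr p0 h M) with pM in Hsum.
  assert (HK0 : 0 <= K) by (unfold K; apply Rdiv_le_0_compat; [pose proof (exp_pos (t*h)); nra|lra]).
  assert (HKp : K * exp (- (u * p0)) <= t / u * exp (- (u * lam)) * (1 + kap)).
  { unfold K, p0. replace (- (u * (lam - h))) with (u * h + - (u * lam)) by ring.
    rewrite <- exp_mul. unfold Rdiv.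
    replace (t * exp (t * h) * / u * (exp (u * h) * exp (- (u * lam)))) with
      (t * / u * exp (- (u * lam)) * (exp (t * h) * exp (u * h))) by ring.
    rewrite exp_mul. replace (t * h + u * h) with ((t + u) * h) by ring.
    apply Rmult_le_compat_l; auto. pose proof (exp_pos (- (u * lam))).
    assert (0 <= t * / u) by (apply Rmult_le_pos; [lra| apply Rlt_le, Rinv_0_lt_compat; lra]). nra. }
  assert (Hkap' : t / u * exp (- (u * lam)) * kap <= eps / 4).
  { pose proof (expm_le1 (u * lam) ltac:(nra)). pose proof (exp_pos (- (u * lam))).
    assert (t / u * kap = eps * t / (4 * (t + 1))) by (unfold kap; field; lra).
    assert (eps * t / (4 * (t + 1)) <= eps / 4).
    { apply (Rmult_le_reg_r (4 * (t + 1))). lra.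
      replace (eps * t / (4 * (t + 1)) * (4 * (t + 1))) with (eps * t) by (field; lra). nra. }
    assert (0 <= t / u * kap) by (apply Rmult_le_pos; [apply Rdiv_le_0_compat; lra|lra]).
    nra. }
  assert (HKe : 0 <= K * exp (- (u * pM))) by (pose proof (exp_pos (- (u * pM))); nra).
  assert (HVbb : V b0 <= V b) by (apply HV; lra).
  fold t. unfold t in HU. fold t in HU. lra.
Qed.
Lemma claim1_TV V L c A : Vmono V -> V0prop V -> VLprop V L -> Vrcprop V -> 0 < c < L -> 0 < A ->
  let alpha := sqrt (tauV V c * lamV V c) in
  TV V (c + (A + alpha) / (A * exp (A * alpha))) <= tauV V c * (alpha + A) / alpha.
Proof.
  intros HV H0 HL Hrc Hc HA alpha.
  pose proof (tau_pos V L c HV H0 HL Hrc Hc) as Htau.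
  pose proof (lam_pos V L c HV H0 HL Hc) as Hlam.
  set (tau := tauV V c) in *. set (lam := lamV V c) in *.
  assert (Hal : 0 < alpha) by (apply sqrt_lt_R0; nra).
  assert (Hal2 : alpha * alpha = tau * lam) by (apply sqrt_sqrt; nra).
  set (u := tau * A / alpha).
  assert (Hu : 0 < u) by (unfold u; apply Rdiv_lt_0_compat; nra).
  pose proof (claim1_core V L c u HV H0 HL Hrc Hc Hu) as Hcore. fold tau lam in Hcore.
  assert (E1 : tau + u = tau * (alpha + A) / alpha) by (unfold u; field; lra).
  assert (E2 : (tau + u) / u * exp (- (u * lam)) = (A + alpha) / (A * exp (A * alpha))).
  { assert (u * lam = A * alpha).
    { unfold u. apply (Rmult_eq_reg_r alpha); [|lra].
      replace (tau * A / alpha * lam * alpha) with (A * (tau * lam)) by (field; lra). rewrite <- Hal2. ring. }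
    rewrite H, exp_Ropp. pose proof (exp_pos (A * alpha)). unfold u. field. split; lra. }
  rewrite E2 in Hcore. rewrite <- E1.
  apply (TV_le V L); auto.
  - pose proof (exp_pos (A * alpha)).
    assert (0 < (A + alpha) / (A * exp (A * alpha))) by (apply Rdiv_lt_0_compat; nra). lra.
  - lra.
Qed.

Lemma claim3 V L eps c1 c2 B : Vmono V -> V0prop V -> VLprop V L -> 0 < eps ->
  0 < c1 < L -> 0 < c2 < L -> 0 < B ->
  TV V (c1 + c2 * exp (- (TV V eps * lamV V c1)) + 2 * eps * exp (- B))
    <= TV V eps + 2 * B / lamV V c2.
Proof.
  intros HV H0 HL He Hc1 Hc2 HB.
  pose proof (lam_pos V L c1 HV H0 HL Hc1) as Hl1.
  pose proof (lam_pos V L c2 HV H0 HL Hc2) as Hl2.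
  set (l1 := lamV V c1) in *. set (l2 := lamV V c2) in *.
  destruct (TV_spec V L HV H0 HL eps He) as [HT0 [HT1 _]].
  set (T := TV V eps) in *.
  set (s := 2 * B / l2).
  assert (Hs : 0 < s) by (unfold s; apply Rdiv_lt_0_compat; lra).
  assert (Hsl : s * l2 = 2 * B) by (unfold s; field; lra).
  set (t' := T + s).
  pose proof (exp_pos (- (T * l1))). pose proof (exp_pos (- B)).
  apply (TV_le V L); auto. nra. unfold t'; lra.
  apply Rle_plus_epsilon. intros e' He'.
  set (kap := Rmin 1 (e' / (3 * (c2 + 1)))).
  assert (Hkap : 0 < kap) by (unfold kap; apply Rmin_pos; [lra|apply Rdiv_lt_0_compat; lra]).
  assert (Hk1 : kap <= 1) by apply Rmin_l.
  assert (Hk2 : kap <= e' / (3 * (c2 + 1))) by apply Rmin_r.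
  assert (Hlk : 0 < ln (1 + kap)) by (rewrite <- ln_1; apply ln_increasing; lra).
  set (h0 := ln (1 + kap) / (t' + 1)).
  assert (Hh0 : 0 < h0) by (unfold h0; apply Rdiv_lt_0_compat; unfold t'; lra).
  set (h := Rmin h0 (Rmin l1 l2 / 2)).
  assert (Hmin : 0 < Rmin l1 l2) by (apply Rmin_pos; lra).
  assert (Hh : 0 < h) by (unfold h; apply Rmin_pos; lra).
  assert (Hhh0 : h <= h0) by apply Rmin_l.
  assert (Hhl : h <= Rmin l1 l2 / 2) by apply Rmin_r.
  pose proof (Rmin_l l1 l2). pose proof (Rmin_r l1 l2).
  assert (Heh : exp (t' * h) <= 1 + kap).
  { assert (Hth : t' * h <= ln (1 + kap)).
    { assert ((t' + 1) * h0 = ln (1 + kap)) by (unfold h0; field; unfold t'; lra). unfold t' in *. nra. }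
    apply exp_le in Hth. rewrite exp_ln in Hth by lra. auto. }
  set (m1 := Rmin l1 l2 - h). set (m2 := l2 - h).
  assert (Hm1 : 0 < m1) by (unfold m1; lra).
  assert (Hm12 : m1 <= m2) by (unfold m1, m2; lra).
  destruct (get_small V H0 (e' / 3) ltac:(lra) m1 Hm1) as [a [Ha Ha']].
  destruct (get_big V L HL (e' / 3) ltac:(lra) l2) as [b0 [Hb0 Hb0']].
  destruct (INR_unbounded ((b0 - m2) / h)) as [N HN].
  set (b := m2 + INR N * h).
  assert (Hbb : b0 < b).
  { unfold b. apply (Rmult_lt_compat_r h) in HN; auto.
    replace ((b0 - m2) / h * h) with (b0 - m2) in HN by (field; lra). lra. }
  assert (Hwq : wpart m2 b N (gr m2 h)) by (apply wpart_gr; lra).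
  assert (Hw : wpart a b (1 + (1 + N)) (cc (tp a m1) 1 (cc (tp m1 m2) 1 (gr m2 h)))).
  { eapply wpart_cc. apply wpart_tp; lra. eapply wpart_cc. apply wpart_tp; lra. auto. }
  destruct (LapV_bracket t' V L a b _ _ ltac:(unfold t'; lra) HV H0 HL ltac:(lra) Hw) as [_ HU].
  rewrite psum_cc in HU by (rewrite cc_left by lia; simpl; auto).
  rewrite psum_cc in HU by (unfold gr; simpl; ring).
  rewrite !psum_tp in HU.
  destruct (LapV_bracket T V L m2 b N (gr m2 h) HT0 HV H0 HL ltac:(unfold m2; lra) Hwq) as [HLQ _].
  set (K := exp (t' * h) * exp (- (s * l2))).
  assert (HQ : psum (uw t' V) (gr m2 h) N <= psum (fun x y => K * lw T V x y) (gr m2 h) N).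
  { apply psum_le. intros k Hk. unfold uw, lw, K.
    assert (Hx : m2 <= gr m2 h k) by (unfold gr; pose proof (pos_INR k); nra).
    assert (Hy : gr m2 h (S k) = gr m2 h k + h) by (unfold gr; rewrite S_INR; ring).
    rewrite Hy. set (x := gr m2 h k) in *.
    assert (exp (- (t' * x)) <= exp (t' * h) * exp (- (s * l2)) * exp (- (T * (x + h)))).
    { rewrite !exp_mul. apply exp_le. unfold t', m2 in *. nra. }
    pose proof (HV x (x + h) ltac:(unfold m2 in Hx; lra) ltac:(lra)).
    assert (0 <= V (x + h) - V x) by lra. nra. }
  assert (HQ2 : psum (fun x y => K * lw T V x y) (gr m2 h) N = K * psum (lw T V) (gr m2 h) N).
  { clear. induction N; simpl. ring. rewrite IHN. ring. }
  rewrite HQ2 in HQ.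
  assert (HK : K <= 2 * exp (- B)).
  { unfold K. rewrite Hsl. pose proof (exp_pos (t' * h)).
    assert (exp (- (2 * B)) <= exp (- B)) by (apply exp_le; lra). pose proof (exp_pos (- (2 * B))). nra. }
  assert (HK0 : 0 <= K) by (unfold K; pose proof (exp_pos (t' * h)); pose proof (exp_pos (- (s * l2))); nra).
  assert (HKQ : K * psum (lw T V) (gr m2 h) N <= 2 * eps * exp (- B)).
  { pose proof (lsum_nonneg T V m2 b N (gr m2 h) HV ltac:(unfold m2; lra) Hwq). nra. }
  assert (Hfirst : uw t' V a m1 <= c1).
  { unfold uw. assert (Hpl : 0 < m1 < l1) by (unfold m1; lra).
    pose proof (lam_below V L c1 m1 HV H0 HL Hc1 Hpl).
    pose proof (HV a m1 ltac:(lra) ltac:(lra)). pose proof (expm_le1 (t' * a) ltac:(unfold t'; nra)).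
    pose proof (V_nonneg V HV H0 a ltac:(lra)).
    pose proof (exp_pos (- (t' * a))). nra. }
  assert (Hsecond : uw t' V m1 m2 <= exp (T * h) * exp (- (T * l1)) * c2).
  { unfold uw. pose proof (exp_pos (T * h)).
    destruct (Rle_or_lt l1 l2) as [Hle|Hlt].
    - assert (Em : m1 = l1 - h) by (unfold m1; rewrite Rmin_left by lra; ring).
      assert (exp (- (t' * m1)) <= exp (T * h) * exp (- (T * l1))).
      { rewrite exp_mul. apply exp_le. rewrite Em. unfold t'. nra. }
      assert (Hpl : 0 < m2 < l2) by (unfold m2; lra).
      pose proof (lam_below V L c2 m2 HV H0 HL Hc2 Hpl).
      pose proof (V_nonneg V HV H0 m1 Hm1). pose proof (HV m1 m2 Hm1 Hm12).
      pose proof (exp_pos (- (t' * m1))). nra.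
    - assert (Em : m1 = m2) by (unfold m1, m2; rewrite Rmin_right by lra; ring).
      rewrite Em. replace (V m2 - V m2) with 0 by ring. rewrite Rmult_0_r.
      pose proof (exp_pos (- (T * l1))). apply Rmult_le_pos; [apply Rmult_le_pos|]; lra. }
  assert (HTh : exp (T * h) <= 1 + kap).
  { eapply Rle_trans; [|exact Heh]. apply exp_le. unfold t'. nra. }
  assert (Hc2k : (exp (T * h) - 1) * exp (- (T * l1)) * c2 <= e' / 3).
  { pose proof (expm_le1 (T * l1) ltac:(nra)).
    assert (1 <= exp (T * h)) by (rewrite <- exp_0; apply exp_le; nra).
    assert (kap * c2 <= e' / 3).
    { apply Rle_trans with (e' / (3 * (c2 + 1)) * c2). apply Rmult_le_compat_r; lra.
      apply (Rmult_le_reg_r (3 * (c2 + 1))). lra.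
      replace (e' / (3 * (c2 + 1)) * c2 * (3 * (c2 + 1))) with (e' * c2) by (field; lra). nra. }
    assert ((exp (T * h) - 1) * exp (- (T * l1)) <= kap) by nra. nra. }
  assert (HVb : V b0 <= V b) by (apply HV; lra).
  unfold t' in HU. fold t' in HU. lra.
Qed.
Lemma ln1p_ge c : 0 < c -> c / (1 + c) <= ln (1 + c).
Proof.
  intros Hc. pose proof (exp_ineq1_le (- ln (1 + c))). rewrite exp_Ropp, exp_ln in H by lra.
  assert (c / (1 + c) = 1 - / (1 + c)) by (field; lra). lra.
Qed.

Lemma claim4b V L d : Vmono V -> V0prop V -> VLprop V L -> Vrcprop V -> 0 < d < / 2 -> d / 2 < L ->
  TV V d <= 6 / d ^ 2 * tauV V (d / 2).
Proof.
  intros HV H0 HL Hrc Hd HdL.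
  set (c := d / 2).
  assert (Hc : 0 < c < L) by (unfold c; lra).
  pose proof (tau_pos V L c HV H0 HL Hrc Hc) as Htau.
  pose proof (lam_pos V L c HV H0 HL Hc) as Hlam.
  pose proof (tau_lam V L c HV H0 HL Hrc Hc) as Htl.
  set (tau := tauV V c) in *. set (lam := lamV V c) in *.
  set (alpha := sqrt (tau * lam)).
  assert (Hal : 0 < alpha) by (apply sqrt_lt_R0; nra).
  assert (Hal2 : alpha * alpha = tau * lam) by (apply sqrt_sqrt; nra).
  set (K := 6 / d ^ 2 - 1).
  assert (Hd2 : 0 < d ^ 2) by (simpl; nra).
  assert (HK6 : 6 / d ^ 2 = K + 1) by (unfold K; ring).
  assert (HKd : (K + 1) * d ^ 2 = 6) by (rewrite <- HK6; field; lra).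
  assert (HK : 1 <= K) by (simpl in HKd; nra).
  set (A := K * alpha).
  assert (HA : 0 < A) by (unfold A; nra).
  pose proof (claim1_TV V L c A HV H0 HL Hrc Hc HA) as H1. simpl in H1. fold tau lam alpha in H1.
  assert (E1 : tau * (alpha + A) / alpha = 6 / d ^ 2 * tau) by (rewrite HK6; unfold A; field; lra).
  rewrite E1 in H1.
  assert (E2 : (A + alpha) / (A * exp (A * alpha)) = (K + 1) / K * / exp (K * (alpha * alpha))).
  { unfold A. replace (K * alpha * alpha) with (K * (alpha * alpha)) by ring.
    pose proof (exp_pos (K * (alpha * alpha))). field. split; lra. }
  assert (Ha2 : 2 * d / 5 <= alpha * alpha).
  { pose proof (ln1p_ge c ltac:(lra)). unfold c in *.
    assert (2 * d / 5 <= d / 2 / (1 + d / 2)).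
    { apply (Rmult_le_reg_r (1 + d / 2)). lra. replace (d / 2 / (1 + d / 2) * (1 + d / 2)) with (d / 2) by (field; lra). nra. }
    lra. }
  assert (Hz : 2 / d <= K * (alpha * alpha)).
  { assert (2 / d <= K * (2 * d / 5)).
    { apply (Rmult_le_reg_r d). lra. replace (2 / d * d) with 2 by (field; lra).
      simpl in HKd. nra. }
    nra. }
  assert (Hexp : 4 / d <= exp (K * (alpha * alpha))).
  { apply Rle_trans with (exp (2 / d)); [|apply exp_le; auto].
    replace (2 / d) with (/ d + / d) by (field; lra). rewrite <- exp_mul.
    pose proof (exp_ineq1_le (/ d)).
    assert (Hy : 2 < / d).
    { apply (Rmult_lt_reg_r d). lra. rewrite Rinv_l by lra. lra. }
    replace (4 / d) with (4 * / d) by (unfold Rdiv; ring). nra. }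
  assert (HKK : (K + 1) / K <= 2).
  { apply (Rmult_le_reg_r K). lra. replace ((K + 1) / K * K) with (K + 1) by (field; lra). lra. }
  assert (Hterm : (K + 1) / K * / exp (K * (alpha * alpha)) <= d / 2).
  { pose proof (exp_pos (K * (alpha * alpha))).
    assert (/ exp (K * (alpha * alpha)) <= d / 4).
    { replace (d / 4) with (/ (4 / d)) by (field; lra). apply Rinv_le_contravar; auto.
      apply Rdiv_lt_0_compat; lra. }
    assert (0 <= (K + 1) / K) by (apply Rdiv_le_0_compat; lra).
    assert (0 <= / exp (K * (alpha * alpha))) by (apply Rlt_le, Rinv_0_lt_compat; auto).
    nra. }
  rewrite E2 in H1.
  assert (Hpos : 0 < (K + 1) / K * / exp (K * (alpha * alpha))).
  { apply Rmult_lt_0_compat. apply Rdiv_lt_0_compat; lra. apply Rinv_0_lt_compat, exp_pos. }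
  eapply Rle_trans; [|exact H1].
  apply (TV_mono V L); auto. unfold c; lra. unfold c; lra.
Qed.

Theorem proposition2p6 (V : R -> R) (HV : in_classV V)
  (eps c c1 c2 : R)
  (Heps : 0 < eps < LapV V 0) (Hc : 0 < c < LapV V 0)
  (Hc1 : 0 < c1 < LapV V 0) (Hc2 : 0 < c2 < LapV V 0) :
  let alpha := sqrt (tauV V c * lamV V c) in
  (forall A, 0 < A ->
     alpha / (alpha + A) * TV V (c + (A + alpha) / (A * exp (A * alpha))) <= tauV V c) /\
  tauV V c <= TV V (c / (1 + c)) /\
  (forall B, 0 < B ->
     TV V (c1 + c2 * exp (- (TV V eps * lamV V c1)) + 2 * eps * exp (- B))
       <= TV V eps + 2 * B / lamV V c2) /\
  (forall delta, 0 < delta < / 2 * Rmin (LapV V 0) 1 ->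
     tauV V (2 * delta) <= TV V delta /\
     TV V delta <= 6 / delta ^ 2 * tauV V (delta / 2)).
Proof.
  intros alpha. destruct HV as [HVm [Hrc [H0 [L HL]]]].
  change (Vmono V) in HVm. change (Vrcprop V) in Hrc. change (V0prop V) in H0. change (VLprop V L) in HL.
  pose proof (Lap0_le 0 V L (Rle_refl 0) HVm H0 HL) as HL0.
  assert (Hc' : 0 < c < L) by lra.
  split; [|split; [|split]].
  - intros A HA. pose proof (claim1_TV V L c A HVm H0 HL Hrc Hc' HA) as H. simpl in H. fold alpha in H.
    pose proof (tau_pos V L c HVm H0 HL Hrc Hc') as Htau.
    pose proof (lam_pos V L c HVm H0 HL Hc') as Hlam.
    assert (Hal : 0 < alpha) by (apply sqrt_lt_R0; nra).
    assert (0 < alpha / (alpha + A)) by (apply Rdiv_lt_0_compat; lra).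
    apply Rmult_le_compat_l with (r := alpha / (alpha + A)) in H; [|lra].
    replace (alpha / (alpha + A) * (tauV V c * (alpha + A) / alpha)) with (tauV V c) in H by (field; lra).
    auto.
  - apply (claim2 V L); auto.
  - intros B HB. apply (claim3 V L); auto; lra.
  - intros delta Hd. pose proof (Rmin_l (LapV V 0) 1). pose proof (Rmin_r (LapV V 0) 1).
    split.
    + assert (H2d : 0 < 2 * delta < L) by lra.
      pose proof (claim2 V L (2 * delta) HVm H0 HL Hrc H2d) as Hcl.
      eapply Rle_trans; [exact Hcl|]. apply (TV_mono V L); auto. lra.
      apply (Rmult_le_reg_r (1 + 2 * delta)). lra.
      replace (2 * delta / (1 + 2 * delta) * (1 + 2 * delta)) with (2 * delta) by (field; lra). nra.
    + apply (claim4b V L); auto; lra.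
Qed.
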